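(* Let $T:X\to Y$ be a linear mapping between finite-dimensional Euclidean spaces and let $C\subset X$ be a strictly convex cone with $\operatorname{Ker}T\cap\operatorname{int}C\neq\emptyset$. Define the multifunction $F:\operatorname{Im}T\rightrightarrows X$ by $F(v)=\{u\in X: Tu=v\}\cap C$. Then $F$ is lower semicontinuous at every non-zero point $v\in\operatorname{dom}F$. Moreover, if $T(C)$ is closed, then there exists $\tau>0$ such that $$T(C)\cap\bar B_Y\subset \tau\, T(C\cap\bar B_X).$$
   Context: $\bar B_X,\bar B_Y$ are closed unit balls. $\operatorname{dom}F=\{v:F(v)\ne\emptyset\}$. $F$ is lower semicontinuous at $\bar v\in\operatorname{dom}F$ if for every open $V\subset X$ with $F(\bar v)\cap V\neq\emptyset$ there is $\varepsilon>0$ with $F(v)\cap V\neq\emptyset$ for all $v\in\operatorname{Im}T$ with $\|v-\bar v\|<\varepsilon$. A cone is regular if pointed, closed, convex, with nonempty interior; a regular cone is strictly convex if every face other than the cone itself and $\{0\}$ has dimension one (a face being a convex $\mathcal F\subset C$ such that $x,y\in C$, $\lambda x+(1-\lambda)y\in\mathcal F$ for some $0<\lambda<1$ implies $x,y\in\mathcal F$). *)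

(* Defs.v *)
(* X = 'rV[R]_n, Y = 'rV[R]_m with Euclidean norm. *)
From HB Require Import structures.
From mathcomp Require Import all_boot all_order all_algebra.
From mathcomp Require Import all_classical all_reals all_analysis.
Set Implicit Arguments. Unset Strict Implicit. Unset Printing Implicit Defensive.
Import Order.TTheory GRing.Theory Num.Theory.
Import numFieldNormedType.Exports.
Local Open Scope classical_set_scope.
Local Open Scope ring_scope.

Section Defs.
Variable R : realType.

Definition enorm (k : nat) (u : 'rV[R]_k) : R := Num.sqrt (\sum_(i < k) u 0 i ^+ 2).

Definition eball1 (k : nat) : set 'rV[R]_k := [set u | enorm u <= 1].

Definition is_cone (k : nat) (C : set 'rV[R]_k) : Prop :=
  C !=set0 /\ forall (l : R) x, 0 <= l -> C x -> C (l *: x).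

Definition convex_set (k : nat) (C : set 'rV[R]_k) : Prop :=
  forall x y (l : R), C x -> C y -> 0 <= l <= 1 -> C (l *: x + (1 - l) *: y).

Definition regular_cone (k : nat) (C : set 'rV[R]_k) : Prop :=
  [/\ is_cone C, C `&` [set - x | x in C] = [set 0], closed C, convex_set C
    & (interior C) !=set0].

Definition is_face (k : nat) (C Fc : set 'rV[R]_k) : Prop :=
  [/\ convex_set Fc, Fc `<=` C &
      forall x y (l : R), C x -> C y -> 0 < l < 1 -> Fc (l *: x + (1 - l) *: y) ->
        Fc x /\ Fc y].

(* (affine) dimension of a set S: the maximal number of linearly independent
   vectors in S - S *)
Definition set_dim (k : nat) (S : set 'rV[R]_k) (d : nat) : Prop :=
  (exists A : 'M[R]_(d, k), (forall i, exists x y, S x /\ S y /\ row i A = x - y)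
                            /\ row_free A) /\
  (forall A : 'M[R]_(d.+1, k), (forall i, exists x y, S x /\ S y /\ row i A = x - y)
                            -> ~~ row_free A).

Definition strictly_convex_cone (k : nat) (C : set 'rV[R]_k) : Prop :=
  regular_cone C /\
  forall Fc, is_face C Fc -> Fc !=set0 -> Fc <> C -> Fc <> [set 0] -> set_dim Fc 1.

Definition Fmap (n m : nat) (T : 'M[R]_(n, m)) (C : set 'rV[R]_n) (v : 'rV[R]_m)
  : set 'rV[R]_n := [set u | u *m T = v] `&` C.

Definition lsc_at (n m : nat) (T : 'M[R]_(n, m)) (F : 'rV[R]_m -> set 'rV[R]_n)
  (vb : 'rV[R]_m) : Prop :=
  forall V : set 'rV[R]_n, open V -> F vb `&` V !=set0 ->
    exists2 eps : R, 0 < eps &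
      forall v, (exists u, u *m T = v) -> enorm (v - vb) < eps -> F v `&` V !=set0.
End Defs.

(* Main.v *)
Require Import Defs.
From HB Require Import structures.
From mathcomp Require Import all_boot all_order all_algebra.
From mathcomp Require Import all_classical all_reals all_analysis.
From mathcomp Require Import ring lra.
Import Order.TTheory GRing.Theory Num.Theory.
Import numFieldNormedType.Exports.
Local Open Scope classical_set_scope.
Local Open Scope ring_scope.

Set Implicit Arguments.
Section Aux.
Context {R : realType}.

Lemma nbhs_coord n (x : 'rV[R]_n) (A : set 'rV[R]_n) : nbhs x A ->
  exists2 e : R, 0 < e & forall y : 'rV[R]_n, (forall j, `|x 0 j - y 0 j| < e) -> A y.
Proof.
move/nbhs_ballP=> [e e0 H]; exists e => // y Hy; apply H; split => // i j.
rewrite (ord1 i) -ball_normE /ball_ /=; exact: Hy.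
Qed.

Lemma enorm_ge0 k (x : 'rV[R]_k) : 0 <= enorm x.
Proof. exact: sqrtr_ge0. Qed.

Lemma coord_le_enorm k (x : 'rV[R]_k) j : `|x 0 j| <= enorm x.
Proof.
rewrite /enorm -sqrtr_sqr; apply: ler_wsqrtr.
rewrite (bigD1 j) //= lerDl; apply: sumr_ge0 => i _; exact: sqr_ge0.
Qed.

Lemma enorm_le k (x : 'rV[R]_k) (B : R) : 0 <= B -> (forall j, `|x 0 j| <= B) ->
  enorm x <= k%:R * B.
Proof.
move=> B0 HB; rewrite /enorm.
have h1 : \sum_(i < k) x 0 i ^+ 2 <= k%:R * B ^+ 2.
  apply: (@le_trans _ _ (\sum_(i < k) B ^+ 2)).
    apply: ler_sum => i _; rewrite -real_normK ?num_real //.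
    by rewrite lerXn2r // ?nnegrE //; apply: HB.
  by rewrite sumr_const card_ord mulr_natl.
have h2 : forall k0 : nat, k0%:R * B ^+ 2 <= (k0%:R * B) ^+ 2.
  case => [|k1]; first by rewrite !mul0r expr0n.
  have hk : 1 <= k1.+1%:R :> R by rewrite ler1n.
  have hB2 : 0 <= B ^+ 2 by apply: sqr_ge0.
  rewrite exprMn; rewrite ler_wpM2r //; rewrite expr2 ler_peMl //; lra.
rewrite -(ger0_norm (_ : 0 <= k%:R * B)); last by apply: mulr_ge0.
by rewrite -sqrtr_sqr; apply: ler_wsqrtr; apply: le_trans h1 (h2 k).
Qed.

Definition Kof m n (P : 'M[R]_(m, n)) : R := \sum_i \sum_k `|P i k|.

Lemma Kof_ge0 m n (P : 'M[R]_(m, n)) : 0 <= Kof P.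
Proof. by apply: sumr_ge0 => i _; apply: sumr_ge0. Qed.

Lemma mulP_bound m n (v : 'rV[R]_m) (P : 'M[R]_(m, n)) (b : R) j :
  0 <= b -> (forall i, `|v 0 i| <= b) -> `|(v *m P) 0 j| <= b * Kof P.
Proof.
move=> b0 Hb; rewrite mxE; apply: le_trans (ler_norm_sum _ _ _) _.
apply: (@le_trans _ _ (\sum_i b * `|P i j|)).
  by apply: ler_sum => i _; rewrite normrM ler_wpM2r.
rewrite -mulr_sumr ler_wpM2l //; apply: ler_sum => i _.
by rewrite (bigD1 j) //= lerDl; apply: sumr_ge0.
Qed.

Lemma cone_add n (C : set 'rV[R]_n) : Defs.is_cone C -> Defs.convex_set C ->
  forall x y, C x -> C y -> C (x + y).
Proof.
move=> [_ Hc] Hv x y Cx Cy.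
have h : 1 - 2^-1 = 2^-1 :> R by lra.
have e : x + y = 2 *: (2^-1 *: x + (1 - 2^-1) *: y).
  by rewrite h -scalerDr scalerA mulfV ?scale1r // pnatr_eq0.
rewrite e; apply: Hc => //. apply: Hv => //; apply/andP; split.
  by rewrite invr_ge0 ler0n.
by rewrite invf_le1 ?ler1n // ltr0n.
Qed.

Lemma cone_shift n (C : set 'rV[R]_n) (u0 x : 'rV[R]_n) (r t : R) : is_cone C ->
  (forall y : 'rV[R]_n, (forall j, `|u0 0 j - y 0 j| < r) -> C y) ->
  0 < t -> (forall j, `|x 0 j| < r * t) -> C (t *: u0 + x).
Proof.
move=> [_ Hc] Hr t0 Hx.
have e : t *: u0 + x = t *: (u0 + t^-1 *: x).
  by rewrite scalerDr scalerA mulfV ?scale1r // gt_eqF.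
rewrite e; apply: Hc; first exact: ltW.
apply: Hr => j; rewrite !mxE opprD addrA subrr sub0r normrN normrM.
rewrite gtr0_norm ?invr_gt0 // mulrC ltr_pdivrMr //; exact: Hx.
Qed.

End Aux.

Theorem lemma2 (R : realType) (n m : nat) (T : 'M[R]_(n, m)) (C : set 'rV[R]_n) :
  strictly_convex_cone C ->
  (exists u, u *m T = 0 /\ (interior C) u) ->
  (forall v : 'rV[R]_m, (exists u, u *m T = v) -> v != 0 ->
      Fmap T C v !=set0 -> lsc_at T (Fmap T C) v) /\
  (closed [set u *m T | u in C] ->
     exists2 tau : R, 0 < tau &
       [set u *m T | u in C] `&` @eball1 R m `<=`
       [set tau *: w | w in [set u *m T | u in C `&` @eball1 R n]]).
Proof.
move=> [[Ccone _ _ Cconv _] _] [u0 [Tu0 Hu0]].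
have [r r0 Hr] := nbhs_coord Hu0.
set P := pinvmx T.
set K := 1 + Kof P.
have K0 : 0 < K by have := Kof_ge0 P; rewrite /K; lra.
set M := 1 + \sum_j `|u0 0 j|.
have M0 : 0 < M.
  have : 0 <= \sum_j `|u0 0 j| by apply: sumr_ge0.
  rewrite /M; lra.
have HM : forall j, `|u0 0 j| <= M.
  move=> j; rewrite /M (bigD1 j) //=.
  have : 0 <= \sum_(i | i != j) `|u0 0 i| by apply: sumr_ge0.
  lra.
split.
- move=> v _ _ _ V oV [u [[Tu Cu] Vu]].
  have [e e0 He] := nbhs_coord (oV u Vu).
  set s := e / (2 * M).
  have s0 : 0 < s by rewrite /s divr_gt0 // mulr_gt0.
  have sM : s * M = e / 2 by rewrite /s; field; rewrite gt_eqF.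
  set delta := Num.min (r * s) (e / 2).
  have d0 : 0 < delta by rewrite /delta lt_min mulr_gt0 //= divr_gt0.
  have d1 : delta <= r * s by rewrite /delta ge_min lexx.
  have d2 : delta <= e / 2 by rewrite /delta ge_min lexx orbT.
  exists (delta / K); first by rewrite divr_gt0.
  move=> v' [x Tx] Hv'.
  set w := v' - v.
  set d := w *m P.
  have Hd : forall j, `|d 0 j| < delta.
    move=> j; apply: le_lt_trans (mulP_bound w P (enorm w) j (enorm_ge0 w) (fun i => coord_le_enorm w i)) _.
    apply: (@le_lt_trans _ _ (enorm w * K)).
      by rewrite ler_wpM2l ?enorm_ge0 // /K lerDr ler01.
    by rewrite -ltr_pdivlMr.
  exists (u + (s *: u0 + d)); split; [split|].
  + have wT : (w <= T)%MS by rewrite /w -Tx -Tu -mulmxBl submxMl.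
    by rewrite /= mulmxDl mulmxDl -scalemxAl Tu0 scaler0 add0r /d mulmxKpV // /w Tu addrCA subrr addr0.
  + apply: (cone_add Ccone Cconv) => //; apply: (cone_shift _ _ _ _ Ccone Hr) => // j.
    by apply: lt_le_trans (Hd j) d1.
  + apply: He => j.
    have -> : (u + (s *: u0 + d)) 0 j = u 0 j + (s * u0 0 j + d 0 j) by rewrite !mxE.
    rewrite opprD addrA subrr sub0r normrN.
    apply: le_lt_trans (ler_normD _ _) _.
    rewrite normrM (gtr0_norm s0).
    have := HM j; have := Hd j.
    have : s * `|u0 0 j| <= s * M by rewrite ler_wpM2l // ltW.
    lra.
- move=> _.
  set t := 2 * K / r.
  have t0 : 0 < t by rewrite /t divr_gt0 // mulr_gt0.
  have rt : r * t = 2 * K by rewrite /t; field; rewrite gt_eqF.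
  set L := K + t * M.
  have L0 : 0 < L by rewrite /L addr_gt0 // mulr_gt0.
  set tau := n%:R * L + 1.
  have tau0 : 0 < tau by rewrite /tau ltr_pwDr // mulr_ge0 // ltW.
  exists tau => // v [[u Cu Tu] Hv].
  have vT : (v <= T)%MS by rewrite -Tu submxMl.
  set x := v *m P.
  have Hx : forall j, `|x 0 j| < K.
    move=> j; apply: le_lt_trans (mulP_bound v P 1 j ler01 (fun i => le_trans (coord_le_enorm v i) Hv)) _.
    by rewrite mul1r /K ltrDr ltr01.
  set y := t *: u0 + x.
  have Cy : C y.
    apply: (cone_shift _ _ _ _ Ccone Hr) => // j; rewrite rt.
    by have := Hx j; have := K0; lra.
  have Hy : forall j, `|y 0 j| <= L.
    move=> j.
    have -> : y 0 j = t * u0 0 j + x 0 j by rewrite !mxE.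
    apply: le_trans (ler_normD _ _) _.
    rewrite normrM (gtr0_norm t0).
    have := Hx j; have : t * `|u0 0 j| <= t * M by rewrite ler_wpM2l // ltW.
    rewrite /L; lra.
  exists ((tau^-1 *: y) *m T).
    exists (tau^-1 *: y) => //; split.
      by case: Ccone => _ Hc; apply: Hc => //; rewrite invr_ge0 ltW.
    rewrite /eball1 /=.
    apply: le_trans (enorm_le _ (tau^-1 * L) _ _) _.
    + by rewrite mulr_ge0 // ?invr_ge0 ltW.
    + move=> j; rewrite mxE normrM gtr0_norm ?invr_gt0 //.
      by rewrite ler_wpM2l // invr_ge0 ltW.
    + by rewrite mulrCA mulrC ler_pdivrMr // mul1r /tau lerDl ler01.
  by rewrite -scalemxAl scalerA mulfV ?gt_eqF // scale1r /y mulmxDl -scalemxAl Tu0 scaler0 add0r /x mulmxKpV.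
Qed.
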